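(* Let $k$ be a positive integer. If $G$ and $G'$ are linear forests with the same number of vertices and the same number of edges, all of whose components have at least $k-1$ vertices, then $\mathcal{D}_k(G)=\mathcal{D}_k(G')$.
   Context: A linear forest is a disjoint union of paths. The $k$-deck $\mathcal{D}_k(G)$ is the multiset of isomorphism classes of the induced subgraphs of $G$ on $k$ vertices. *)

(* Defs.v *)
From mathcomp Require Import all_boot.
Unset Strict Implicit. Unset Printing Implicit Defensive.

Record graph : Type := Graph {
  V : finType;
  adj : rel V;
  adj_sym : symmetric adj;
  adj_irrefl : irreflexive adj
}.

Definition nverts (G : graph) : nat := #|V G|.

Definition nedges (G : graph) : nat :=
  #|[set E : {set V G} | [exists x, exists y, (E == [set x; y]) && adj G x y]]|.

Definition consec (T : eqType) (p : seq T) (x y : T) : bool :=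
  ((x, y) \in zip p (behead p)) || ((y, x) \in zip p (behead p)).

(* P is a decomposition of G into vertex-disjoint paths (the components):
   every vertex lies in exactly one of the (nonempty) vertex sequences of P,
   and x ~ y iff x, y are consecutive in one of these sequences. *)
Definition path_decomposition (G : graph) (P : seq (seq (V G))) : Prop :=
  [/\ uniq (flatten P),
      (forall x : V G, x \in flatten P),
      (forall p, p \in P -> p != [::]) &
      (forall x y : V G, adj G x y = has (fun p => consec _ p x y) P)].

Definition linear_forest_minc (G : graph) (m : nat) : Prop :=
  exists P, path_decomposition G P /\ (forall p, p \in P -> m <= size p).

Definition linear_forest (G : graph) : Prop := linear_forest_minc G 0.

Definition induced_iso (G : graph) (S : {set V G}) (H : graph) : bool :=
  [exists f : {ffun V H -> V G},
     [&& injectiveb f, f @: setT == S &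
         [forall a, forall b, adj H a b == adj G (f a) (f b)]]].

(* multiplicity of the isomorphism class of H in the k-deck of G *)
Definition deck_count (k : nat) (G H : graph) : nat :=
  #|[set S : {set V G} | (#|S| == k) && induced_iso G S H]|.

Definition same_deck (k : nat) (G G' : graph) : Prop :=
  forall H : graph, deck_count k G H = deck_count k G' H.

(* Main.v *)
Require Import Defs.
From mathcomp Require Import all_boot zify.
Set Implicit Arguments. Unset Strict Implicit. Unset Printing Implicit Defensive.

Notation word := (seq bool).

Fixpoint SW (m : nat) (G : word -> nat) : nat :=
  match m with
  | 0 => G [::]
  | m'.+1 => SW m' (fun w => G (true :: w)) + SW m' (fun w => G (false :: w))
  end.

Lemma SW_ext m G G' : (forall w, size w = m -> G w = G' w) -> SW m G = SW m G'.
Proof.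
elim: m G G' => [|m IH] G G' H /=; first by apply: H.
congr (_ + _); apply: IH => w Hw; apply: H; by rewrite /= Hw.
Qed.

Lemma SW_add m G1 G2 : SW m (fun w => G1 w + G2 w) = SW m G1 + SW m G2.
Proof.
elim: m G1 G2 => [|m IH] G1 G2 //=.
by rewrite !IH addnACA.
Qed.

Lemma SW_zero m G : (forall w, G w = 0) -> SW m G = 0.
Proof.
elim: m G => [|m IH] G H /=; first by apply: H.
by rewrite !IH.
Qed.

Lemma SW_sum m n (F : nat -> word -> nat) :
  SW m (fun w => \sum_(0 <= i < n) F i w) = \sum_(0 <= i < n) SW m (F i).
Proof.
elim: n => [|n IH].
  by rewrite big_geq // SW_zero // => w; rewrite big_geq.
rewrite big_nat_recr //= -IH -SW_add; apply: SW_ext => w _.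
by rewrite big_nat_recr.
Qed.

Lemma SW_exch m m' (G : word -> word -> nat) :
  SW m (fun u => SW m' (fun v => G u v)) = SW m' (fun v => SW m (fun u => G u v)).
Proof.
elim: m G => [|m IH] G //=.
by rewrite !IH -SW_add.
Qed.

Lemma SW_rcons m G :
  SW m.+1 G = SW m (fun w => G (rcons w true)) + SW m (fun w => G (rcons w false)).
Proof.
elim: m G => [|m IH] G //.
transitivity (SW m.+1 (fun w => G (true :: w)) + SW m.+1 (fun w => G (false :: w))); first by [].
rewrite (IH (fun w => G (true :: w))) (IH (fun w => G (false :: w))).
by rewrite addnACA.
Qed.

Lemma SW_cat m m' G :
  SW (m + m') G = SW m (fun u => SW m' (fun v => G (u ++ v))).
Proof.
elim: m G => [|m IH] G //=.
by rewrite !IH.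
Qed.

Lemma SW_lvl0 m G : (forall w, 0 < count id w -> G w = 0) -> SW m G = G (nseq m false).
Proof.
elim: m G => [|m IH] G H //=.
rewrite (@SW_zero _ (fun w => G (true :: w))); last by move=> w; apply: H.
by rewrite IH // => w Hw; apply: H.
Qed.

Lemma SW_runf m G :
  SW m G = \sum_(0 <= s < m) SW (m - s.+1) (fun w => G (nseq s true ++ false :: w))
           + G (nseq m true).
Proof.
elim: m G => [|m IH] G; first by rewrite big_geq.
rewrite /= IH big_nat_recl //= subn1 /=.
rewrite (eq_bigr (fun i => SW (m - i.+1) (fun w : word => G (true :: nseq i true ++ false :: w)))); first by lia.
by [].

Qed.

Lemma rcons_nseqT n (x : bool) : rcons (nseq n x) x = x :: nseq n x.
Proof. by elim: n => //= n ->. Qed.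

Lemma SW_runb m G :
  SW m G = \sum_(0 <= s < m) SW (m - s.+1) (fun w => G (w ++ false :: nseq s true))
           + G (nseq m true).
Proof.
elim: m G => [|m IH] G; first by rewrite big_geq.
rewrite SW_rcons IH big_nat_recl //= subn1 /=.
rewrite [in RHS](eq_bigr (fun i => SW (m - i.+1) (fun w : word => G (rcons (w ++ false :: nseq i true) true)))).
  rewrite rcons_nseqT (@SW_ext _ (fun w => G (rcons w false)) (fun w => G (w ++ [:: false]))); first by lia.
  by move=> w _; rewrite cats1.
by move=> i _; rewrite subSS; apply: SW_ext => w _; rewrite rcons_cat /= rcons_nseqT.
Qed.


Lemma cnt_cat (a b : word) : count id (a ++ b) = count id a + count id b.
Proof. exact: count_cat. Qed.
Lemma cnt_nseq n b : count id (nseq n b) = b * n.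
Proof. by rewrite count_nseq. Qed.

Definition good (G : word -> nat) :=
  [/\ forall a b c, G (a ++ false :: b ++ false :: c) =
                      G (a ++ false :: c ++ false :: b),
      forall a b, G (a ++ false :: false :: b) = G (a ++ false :: b),
      forall a, G (false :: a) = G a &
      forall a, G (a ++ [:: false]) = G a].

Definition lvl J (G : word -> nat) := forall w, J < count id w -> G w = 0.

Section Good.
Variable G : word -> nat.
Hypothesis gG : good G.

Lemma good_lead m a : G (nseq m false ++ a) = G a.
Proof. case: gG => _ _ H3 _; elim: m => //= m IH; by rewrite H3. Qed.

Lemma good_trail m a : G (a ++ nseq m false) = G a.
Proof.
case: gG => _ _ _ H4; elim: m a => [|m IH] a; first by rewrite cats0.
by rewrite /= -cat_rcons IH -cats1 H4.
Qed.

Lemma good_swap3 a b c : G (a ++ false :: b ++ false :: c) = G (a ++ false :: c ++ false :: b).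
Proof. by case: gG => H1 _ _ _; apply: H1. Qed.

Lemma good_R1 a b c d : G (a ++ false :: b ++ false :: c ++ false :: d) =
                      G (a ++ false :: c ++ false :: b ++ false :: d).
Proof.
rewrite (good_swap3 a b (c ++ false :: d)).
have := good_swap3 (a ++ false :: c) d b; rewrite -?catA /= -?catA /= => <-.
by rewrite -?catA.
Qed.

Lemma good_swapfront a b c : G (a ++ false :: b ++ false :: c) = G (b ++ false :: a ++ false :: c).
Proof.
case: gG => _ _ H3 _.
rewrite -H3 -[in RHS]H3.
exact: (good_R1 [::]).
Qed.

Lemma good_swap2 a b : G (a ++ false :: b) = G (b ++ false :: a).
Proof.
case: gG => _ _ H3 H4.
rewrite -H4 -[in RHS]H4 -!catA /=.
by rewrite (good_swapfront a b [::]).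
Qed.

End Good.

Lemma good_suffix G c : good G -> good (fun z => G (z ++ false :: c)).
Proof.
move=> gG; have R1 := good_R1 gG.
case: gG => H1 H2 H3 H4; split.
- by move=> a b c'; rewrite -?catA /= -?catA /= -?catA /= -?catA /= R1.
- by move=> a b; rewrite -!catA /= H2.
- by move=> a; rewrite /= H3.
- by move=> a; rewrite -catA /= H2.
Qed.

Lemma good_prefix G c : good G -> good (fun z => G (c ++ false :: z)).
Proof.
case=> H1 H2 H3 H4; split.
- by move=> a b c'; have := H1 (c ++ false :: a) b c'; rewrite -!catA.
- by move=> a b; have := H2 (c ++ false :: a) b; rewrite -!catA.
- by move=> a; have := H2 c a.
- by move=> a; have := H4 (c ++ false :: a); rewrite -!catA.
Qed.

Lemma good_SW m (H : word -> word -> nat) :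
  (forall u, good (H u)) -> good (fun z => SW m (fun u => H u z)).
Proof.
move=> gH; split.
- by move=> a b c; apply: SW_ext => u _; case: (gH u) => H1 _ _ _; rewrite H1.
- by move=> a b; apply: SW_ext => u _; case: (gH u) => _ H2 _ _; rewrite H2.
- by move=> a; apply: SW_ext => u _; case: (gH u) => _ _ H3 _; rewrite H3.
- by move=> a; apply: SW_ext => u _; case: (gH u) => _ _ _ H4; rewrite H4.
Qed.

Lemma lvl_suffix J G c : lvl J G -> lvl (J - count id c) (fun z => G (z ++ false :: c)).
Proof. move=> H z Hz; apply: H; rewrite cnt_cat /=; lia. Qed.

Lemma lvl_mono J J' G : J <= J' -> lvl J G -> lvl J' G.
Proof. move=> HJ H z Hz; apply: H; lia. Qed.

Definition T G a b := SW a (fun u => SW b (fun v => G (u ++ false :: v))).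

Definition onestep J := forall G a b, good G -> lvl J G -> J <= a.+1 -> J <= b -> 0 < b ->
  T G a b = T G a.+1 b.-1.

Lemma gen_move J : onestep J -> forall G a b a' b', good G -> lvl J G ->
  J <= a.+1 -> J <= b.+1 -> J <= a'.+1 -> J <= b'.+1 -> a + b = a' + b' -> T G a b = T G a' b'.
Proof.
move=> OS G a b a' b' gG lG.
wlog le : a b a' b' / a <= a'.
  move=> W h1 h2 h3 h4 h5; case: (leqP a a') => h; first exact: W.
  by symmetry; apply: W => //; lia.
move=> h1 h2 h3 h4 h5.
have [d Hd] : exists d, a' = a + d by exists (a' - a); lia.
elim: d a b le h1 h2 h5 Hd => [|d IH] a b le h1 h2 h5 Hd.
  have e1 : a' = a by lia.
  have e2 : b' = b by lia.
  by rewrite e1 e2.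
rewrite (OS G a b) //; try lia.
by apply: IH; lia.
Qed.

Lemma trunc (X : nat -> nat) E V J' y : J' <= y ->
  (forall s, J' < s < y -> X s = 0) -> (J' < y -> X J' = V /\ E = 0) -> (J' = y -> E = V) ->
  \sum_(0 <= s < y) X s + E = \sum_(0 <= s < J') X s + V.
Proof.
move=> le Z L Q; case: (ltnP J' y) => h; last first.
  have e : J' = y by lia.
  by rewrite -e Q // e.
case: (L h) => XJ ->; rewrite (big_cat_nat _ (n := J')) //=; try lia.
rewrite [\sum_(J' <= i < y) _]big_ltn // XJ.
rewrite [\sum_(J'.+1 <= i < y) _]big1_seq ?addn0 //.
by move=> i /andP [_]; rewrite mem_index_iota => /Z.
Qed.

Ltac cntl := rewrite ?cnt_cat /= ?cnt_cat /= ?cnt_nseq /= ?cnt_cat /= ?cnt_nseq /=; lia.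

Lemma good_V G p q r : good G ->
  G (nseq p false ++ false :: nseq q true ++ nseq r false) = G (nseq q true).
Proof.
move=> gG; rewrite good_lead //; case: (gG) => _ _ H3 _; rewrite H3.
exact: good_trail.
Qed.

Lemma onestep_all J : onestep J.
Proof.
elim/ltn_ind: J => J IHJ G a b gG lG ha hb hb0.
case: b hb hb0 => // y hb _ /=.
rewrite /T.
have E1 : SW a (fun u => SW y.+1 (fun v => G (u ++ false :: v))) =
  SW a (fun u => SW y (fun v => G (u ++ false :: true :: v))) +
  SW a (fun u => SW y (fun v => G (u ++ false :: false :: v))).
  by rewrite -SW_add.
have E2 : SW a.+1 (fun u => SW y (fun v => G (u ++ false :: v))) =
  SW a (fun u => SW y (fun v => G (u ++ true :: false :: v))) +
  SW a (fun u => SW y (fun v => G (u ++ false :: false :: v))).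
  by rewrite SW_rcons; congr (_ + _); apply: SW_ext => u _; apply: SW_ext => v _; rewrite cat_rcons.
rewrite E1 E2; congr (_ + _).
case: J IHJ lG ha hb => [|J'] IHJ lG ha hb.
  transitivity 0; [|symmetry]; apply: SW_zero => u; apply: SW_zero => v; apply: lG; cntl.
pose V := G (nseq J'.+1 true).
pose Ls s := SW a (fun u => SW (y - s.+1) (fun w => G (u ++ false :: true :: (nseq s true ++ false :: w)))).
pose Rs s := SW y (fun v => SW (a - s.+1) (fun w => G ((w ++ false :: nseq s true) ++ true :: false :: v))).
have HL : SW a (fun u => SW y (fun v => G (u ++ false :: true :: v))) = \sum_(0 <= s < J') Ls s + V.
  rewrite (@SW_ext _ _ (fun u => \sum_(0 <= s < y) SW (y - s.+1) (fun w => G (u ++ false :: true :: (nseq s true ++ false :: w))) + G (u ++ false :: true :: nseq y true))); last first.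
    by move=> u _; exact: (SW_runf y (fun v => G (u ++ false :: true :: v))).
  rewrite SW_add SW_sum; apply: trunc; first by lia.
  - move=> s /andP [h1 h2]; apply: SW_zero => u; apply: SW_zero => w; apply: lG; cntl.
  - move=> h; split; last by apply: SW_zero => u; apply: lG; cntl.
    rewrite /Ls (@SW_ext _ _ (fun u => G (u ++ false :: true :: (nseq J' true ++ false :: nseq (y - J'.+1) false)))); last first.
      move=> u _; apply: SW_lvl0 => w hw; apply: lG; cntl.
    rewrite SW_lvl0; last by move=> u hu; apply: lG; cntl.
    exact: (good_V a J'.+1 (y - J'.+1).+1 gG).
  - move=> e; rewrite SW_lvl0; last by move=> u hu; apply: lG; cntl.
    rewrite /V e; have := good_V a y.+1 0 gG; by rewrite cats0.
have HR : SW a (fun u => SW y (fun v => G (u ++ true :: false :: v))) = \sum_(0 <= s < J') Rs s + V.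
  rewrite SW_exch.
  rewrite (@SW_ext _ _ (fun v => \sum_(0 <= s < a) SW (a - s.+1) (fun w => G ((w ++ false :: nseq s true) ++ true :: false :: v)) + G (nseq a true ++ true :: false :: v))); last first.
    by move=> v _; exact: (SW_runb a (fun u => G (u ++ true :: false :: v))).
  rewrite SW_add SW_sum; apply: trunc; first by lia.
  - move=> s /andP [h1 h2]; apply: SW_zero => v; apply: SW_zero => w; apply: lG; cntl.
  - move=> h; split; last by apply: SW_zero => v; apply: lG; cntl.
    rewrite /Rs SW_exch (@SW_ext _ _ (fun w => G ((w ++ false :: nseq J' true) ++ true :: false :: nseq y false))); last first.
      move=> w _; apply: SW_lvl0 => v hv; apply: lG; cntl.
    rewrite SW_lvl0; last by move=> w hw; apply: lG; cntl.
    rewrite -catA /= -(cat_rcons true (nseq J' true)) rcons_nseqT.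
    exact: (good_V (a - J'.+1) J'.+1 y.+1 gG).
  - move=> e; rewrite SW_lvl0; last by move=> v hv; apply: lG; cntl.
    rewrite /V -e -(cat_rcons true (nseq J' true)) rcons_nseqT. exact: (good_trail gG y.+1 (nseq J'.+1 true)).
rewrite HL HR; congr (_ + _); apply: eq_big_nat => s /andP [_ hs].
pose Q z := G (z ++ false :: true :: nseq s true).
have gQ : good Q by exact: good_suffix.
have lQ : lvl (J' - s) Q.
  move=> z hz; apply: lG; cntl.
have -> : Ls s = T Q a (y - s.+1).
  apply: SW_ext => u _; apply: SW_ext => w _.
  by rewrite /Q (good_swap3 gG u (true :: nseq s true) w) -catA.
have -> : Rs s = T Q (a - s.+1) y.
  rewrite /Rs SW_exch; apply: SW_ext => w _; apply: SW_ext => v _.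
  rewrite -catA /= -(cat_rcons true (nseq s true)) rcons_nseqT.
  by rewrite /Q (good_swap3 gG w (true :: nseq s true) v) -catA.
apply: (gen_move (IHJ (J' - s) _)) => //; lia.
Qed.

Fixpoint FS (ms : seq nat) (G : word -> nat) : nat :=
  match ms with
  | [::] => G [::]
  | m :: ms' => SW m (fun u => FS ms' (fun w => G (u ++ false :: w)))
  end.

Lemma FS_ext ms G G' : (forall w, G w = G' w) -> FS ms G = FS ms G'.
Proof.
elim: ms G G' => [|m ms IH] G G' H /=; first exact: H.
by apply: SW_ext => u _; apply: IH => w; apply: H.
Qed.

Lemma FS_zero ms G : (forall w, G w = 0) -> FS ms G = 0.
Proof.
elim: ms G => [|m ms IH] G H /=; first exact: H.
by apply: SW_zero => u; apply: IH => w; apply: H.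
Qed.

Lemma good_FS ms (H : word -> word -> nat) :
  (forall w, good (fun z => H z w)) -> good (fun z => FS ms (H z)).
Proof.
move=> gH; split.
- by move=> a b c; apply: FS_ext => w; case: (gH w) => H1 _ _ _; rewrite H1.
- by move=> a b; apply: FS_ext => w; case: (gH w) => _ H2 _ _; rewrite H2.
- by move=> a; apply: FS_ext => w; case: (gH w) => _ _ H3 _; rewrite H3.
- by move=> a; apply: FS_ext => w; case: (gH w) => _ _ _ H4; rewrite H4.
Qed.

Definition Req k ms ms' := forall G, good G -> lvl k G -> FS ms G = FS ms' G.

Lemma Req_cons k m ms1 ms2 : Req k ms1 ms2 -> Req k (m :: ms1) (m :: ms2).
Proof.
move=> H G gG lG /=; apply: SW_ext => u _; apply: H.
  exact: good_prefix.
by move=> w hw; apply: lG; cntl.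
Qed.

Lemma Req_move k x y ms : k <= x.+1 -> k <= y -> 0 < y ->
  Req k (x :: y :: ms) (x.+1 :: y.-1 :: ms).
Proof.
move=> h1 h2 h3 G gG lG.
pose G' z := FS ms (fun w => G (z ++ false :: w)).
have e : forall a b, FS (a :: b :: ms) G = T G' a b.
  move=> a b /=; apply: SW_ext => u _; apply: SW_ext => v _.
  by apply: FS_ext => w; rewrite -catA.
rewrite !e; apply: (onestep_all (J:=k) (G:=G')) => //.
  by apply: good_FS => w; apply: good_suffix.
move=> z hz; apply: FS_zero => w; apply: lG. cntl.
Qed.

Lemma Req_trans k a b c : Req k a b -> Req k b c -> Req k a c.
Proof. by move=> H1 H2 G gG lG; rewrite H1 // H2. Qed.

Lemma Req_chain k x y ms d : k <= x.+1 -> k <= (y - d).+1 -> d <= y ->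
  Req k (x :: y :: ms) (x + d :: y - d :: ms).
Proof.
elim: d x y => [|d IH] x y h1 h2 h3.
  by move=> G _ _; rewrite addn0 subn0.
apply: (Req_trans (Req_move ms h1 _ _)); try lia.
have -> : x + d.+1 = x.+1 + d by lia.
have -> : y - d.+1 = y.-1 - d by lia.
apply: IH; lia.
Qed.

Lemma sumn_ge t s : all (leq t) s -> size s * t <= sumn s.
Proof. elim: s => //= m s IH /andP [h1 /IH h2]; lia. Qed.

Lemma Req_canon k m ms : all (leq k.-1) (m :: ms) ->
  Req k (m :: ms) ((sumn (m :: ms) - size ms * k.-1) :: nseq (size ms) k.-1).
Proof.
elim: ms m => [|m2 ms IH] m.
  by move=> _ G _ _ /=; rewrite mul0n addn0 subn0.
move=> /= /andP [hm hall].
have := IH m2 hall; set y := (sumn (m2 :: ms) - size ms * k.-1) => H.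
have hy : k.-1 <= y.
  have := @sumn_ge k.-1 (m2 :: ms) hall; rewrite /y /=; lia.
apply: (Req_trans (Req_cons m H)).
have := @Req_chain k m y (nseq (size ms) k.-1) (y - k.-1).
have -> : y - (y - k.-1) = k.-1 by lia.
have -> : m + (y - k.-1) = m + (m2 + sumn ms) - (size ms).+1 * k.-1.
  have := @sumn_ge k.-1 (m2 :: ms) hall; rewrite /y /=; lia.
move=> HH; apply: HH; lia.
Qed.

Lemma Req_all k ms ms' : all (leq k.-1) ms -> all (leq k.-1) ms' ->
  size ms = size ms' -> sumn ms = sumn ms' -> Req k ms ms'.
Proof.
case: ms => [|m ms]; case: ms' => [|m' ms'] //= h1 h2 hs hsum.
have e : size ms = size ms' by lia.
apply: (Req_trans (Req_canon (m := m) (ms := ms) h1)).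
have := Req_canon (m := m') (ms := ms') h2; rewrite /= -hsum -e => H G gG lG.
by rewrite H.
Qed.

Lemma sum_sets (T : finType) (vs : seq T) (F : word -> nat) : uniq vs ->
  \sum_(S : {set T} | S \subset [set x in vs]) F [seq x \in S | x <- vs] = SW (size vs) F.
Proof.
elim: vs F => [|x vs IH] F /=.
  move=> _; rewrite (big_pred1 set0) //.
  by move=> S; rewrite /= subset0; congr (_ == _); apply/setP => y; rewrite !inE.
move=> /andP [xn uv].
rewrite (bigID (fun S : {set T} => x \in S)) /= addnC.
transitivity (SW (size vs) (fun w => F (false :: w)) + SW (size vs) (fun w => F (true :: w))); last by rewrite /= addnC.
congr (_ + _).
  rewrite -(IH (fun w => F (false :: w)) uv).
  apply: eq_big => S.
    apply/idP/idP.
      move=> /andP [hs hx]; apply/subsetP => y hy.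
      have := subsetP hs y hy; rewrite !inE => /orP [/eqP e|] //.
      by rewrite -e hy in hx.
    move=> hs; rewrite andbC; apply/andP; split.
      apply/negP => hx; have := subsetP hs x hx; rewrite inE.
      by rewrite (negbTE xn).
    apply: (subset_trans hs); apply/subsetP => y; rewrite !inE => ->; by rewrite orbT.
  by move=> /andP [_ hx]; rewrite (negbTE hx).
rewrite -(IH (fun w => F (true :: w)) uv).
rewrite (reindex_onto (fun S => x |: S) (fun S => S :\ x)); last first.
  by move=> S /andP [_ hx]; rewrite setD1K.
apply: eq_big => S.
  apply/idP/idP.
    move=> /andP [/andP [hs _] /eqP e]; rewrite -e.
    apply/subsetP => y; rewrite !inE => /andP [hy1 hy2].
    move: hy2; rewrite (negbTE hy1) /= => hy2.
    have := subsetP hs y; rewrite !inE hy2 orbT (negbTE hy1) /=; by apply.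
  move=> hs.
  have hxS : x \notin S.
    apply/negP => hx; have := subsetP hs x hx; rewrite inE.
    by rewrite (negbTE xn).
  rewrite setU1K // eqxx andbT setU11 andbT.
  apply/subsetP => y; rewrite !inE => /orP [->|hy] //.
  by have := subsetP hs y hy; rewrite inE => ->; rewrite orbT.
move=> /andP [_ /eqP e].
rewrite setU11; congr (F (true :: _)).
apply/eq_in_map => y hy; rewrite !inE.
have -> : (y == x) = false.
  by apply/eqP => e2; move: hy; rewrite e2 => hy; rewrite hy in xn.
by [].
Qed.

Fixpoint ins (ms : seq nat) (b : word) : word :=
  match ms with
  | [::] => [::]
  | m :: ms' => take m b ++ false :: ins ms' (drop m b)
  end.

Lemma FS_ins ms F : FS ms F = SW (sumn ms) (fun b => F (ins ms b)).
Proof.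
elim: ms F => [|m ms IH] F //=.
rewrite SW_cat; apply: SW_ext => u hu.
rewrite IH; apply: SW_ext => v _.
by rewrite take_size_cat // drop_size_cat.
Qed.

Lemma count_opt (T : eqType) (p : pred T) (L : seq (option T)) :
  count (fun o => if o is Some x then p x else false) L = count p (pmap id L).
Proof. by elim: L => [|[x|] L IH] //=; rewrite IH. Qed.

Lemma nth_opt (T : eqType) (g : T -> bool) (L : seq (option T)) i :
  nth false [seq (if o is Some x then g x else false) | o <- L] i =
  (if nth None L i is Some x then g x else false).
Proof. by elim: L i => [|o L IH] [|i] //=. Qed.

Lemma nth_some_mem (T : eqType) (L : seq (option T)) j x :
  nth None L j = Some x -> x \in pmap id L.
Proof.
move=> e; rewrite mem_pmap map_id -e mem_nth //.
by case: ltnP => // h; rewrite nth_default in e.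
Qed.

Lemma opt_unique (T : eqType) (L : seq (option T)) i j x : uniq (pmap id L) ->
  nth None L i = Some x -> nth None L j = Some x -> i = j.
Proof.
elim: L i j => [|o L IH] [|i] [|j] //=; case: o => [y|] //=.
- move=> /andP [hy _] [<-] /nth_some_mem h.
  by rewrite h in hy.
- move=> /andP [hy _] /nth_some_mem h [e]; subst y.
  by rewrite h in hy.
- by move=> /andP [_ u] e1 e2; congr _.+1; apply: IH e2.
- by move=> u e1 e2; congr _.+1; apply: IH e2.
Qed.

Definition nadj (i j : nat) : bool := (j == i.+1) || (i == j.+1).

Lemma nadj_sym : symmetric nadj.
Proof. by move=> i j; rewrite /nadj orbC. Qed.

Lemma nadj_irr : irreflexive nadj.
Proof. by move=> i; rewrite /nadj; case: i => //= i; rewrite !eqn_leq !ltnn andbF. Qed.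

Definition PG (m : nat) : graph :=
  @Graph 'I_m (fun i j => nadj i j) (fun i j => nadj_sym i j) (fun i => nadj_irr i).

Definition Tw (w : word) : {set 'I_(size w)} := [set i : 'I_(size w) | nth false w i].

Definition embH (H : graph) (w : word) : bool := induced_iso (PG (size w)) (Tw w) H.

Definition cp (T : Type) (s : seq T) := zip s (behead s).

Lemma mem_cp (T : eqType) (s : seq T) d a b :
  reflect (exists i, [/\ i.+1 < size s, nth d s i = a & nth d s i.+1 = b]) ((a, b) \in cp s).
Proof.
elim: s => [|c s IH]; first by apply: (iffP idP) => // -[i []].
case: s IH => [|c' s] IH.
  by apply: (iffP idP) => // -[i []].
rewrite /cp /= in_cons -/(cp (c' :: s)) xpair_eqE.
apply: (iffP orP).
  case=> [/andP [/eqP -> /eqP ->]|/IH [i [h1 h2 h3]]]; first by exists 0.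
  by exists i.+1.
case=> [[|i] [h1 h2 h3]]; first by left; move: h2 h3 => /= -> ->; rewrite !eqxx.
by right; apply/IH; exists i.
Qed.

Lemma Some_eq (T : eqType) (x a : T) : (Some x == Some a) = (x == a).
Proof. by apply/eqP/eqP => [[->]|->]. Qed.

Lemma cp_cat (T : eqType) (p : seq T) (r : seq (option T)) x y :
  ((Some x, Some y) \in cp (map Some p ++ None :: r)) =
  ((x, y) \in cp p) || ((Some x, Some y) \in cp r).
Proof.
have base : forall r, ((Some x, Some y) \in cp (None :: r)) = ((Some x, Some y) \in cp r).
  by case=> [|c r'] //=; rewrite /cp /= in_cons xpair_eqE andFb.
elim: p => [|a p IH] /=; first by rewrite base.
case: p IH => [|a' p] IH /=.
  by rewrite /cp /= in_cons -/(cp (None :: r)) xpair_eqE andbF /= base.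
rewrite /cp /= !in_cons -/(cp (Some a' :: [seq Some i | i <- p] ++ None :: r)) -/(cp (a' :: p)).
by rewrite IH !xpair_eqE !Some_eq orbA.
Qed.

Section GraphLay.
Variable G : graph.
Variable P : seq (seq (V G)).
Hypothesis PD : path_decomposition G P.

Definition Lay : seq (option (V G)) := flatten [seq rcons (map Some p) None | p <- P].
Definition wd (S : {set V G}) : word := [seq (if o is Some x then x \in S else false) | o <- Lay].
Definition pos (x : V G) : nat := index (Some x) Lay.

Lemma pmap_Lay : pmap id Lay = flatten P.
Proof.
rewrite /Lay; elim: P => [|p P' IH] //=.
rewrite pmap_cat IH -cats1 pmap_cat /= cats0; congr (_ ++ _).
by elim: p => //= x p ->.
Qed.

Lemma uniq_Lay : uniq (pmap id Lay).
Proof. by rewrite pmap_Lay; case: PD. Qed.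

Lemma mem_Lay x : Some x \in Lay.
Proof.
have : x \in pmap id Lay by rewrite pmap_Lay; case: PD.
by rewrite mem_pmap map_id.
Qed.

Lemma pos_lt x : pos x < size Lay.
Proof. by rewrite /pos index_mem mem_Lay. Qed.

Lemma nth_pos x : nth None Lay (pos x) = Some x.
Proof. by rewrite /pos nth_index // mem_Lay. Qed.

Lemma pos_inj x y : pos x = pos y -> x = y.
Proof. by move=> e; have := nth_pos x; rewrite e nth_pos => -[]. Qed.

Lemma pos_of i x : nth None Lay i = Some x -> pos x = i.
Proof. move=> e; apply: (opt_unique uniq_Lay (nth_pos x) e). Qed.

Lemma size_wd S : size (wd S) = size Lay.
Proof. by rewrite size_map. Qed.

Lemma nth_wd S i : nth false (wd S) i = (if nth None Lay i is Some x then x \in S else false).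
Proof. exact: nth_opt. Qed.

Lemma nth_wd_pos S x : nth false (wd S) (pos x) = (x \in S).
Proof. by rewrite nth_wd nth_pos. Qed.

Lemma nth_wd_true S i : nth false (wd S) i -> exists2 x, x \in S & pos x = i.
Proof.
rewrite nth_wd; case e: (nth None Lay i) => [x|] // hx.
by exists x => //; apply: pos_of.
Qed.

Lemma perm_flat : perm_eq (flatten P) (enum (V G)).
Proof.
case: PD => u a _ _; apply: uniq_perm => //; first exact: enum_uniq.
by move=> x; rewrite mem_enum a.
Qed.

Lemma count_wd S : count id (wd S) = #|S|.
Proof.
rewrite count_map.
have -> : count (preim (fun o => if o is Some x then x \in S else false) id) Lay =
          count (fun o => if o is Some x then x \in S else false) Lay by [].
rewrite count_opt pmap_Lay (permP perm_flat) cardE /enum_mem size_filter.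
have -> : [seq x <- Finite.enum (V G) | mem (V G) x] = Finite.enum (V G) by apply/all_filterP/allP.
by apply: eq_count => x.
Qed.

Lemma wd_ins S : wd S = ins (map size P) [seq x \in S | x <- flatten P].
Proof.
rewrite /wd /Lay; elim: P => [|p P' IH] //=.
rewrite map_cat IH map_cat -cats1 map_cat /= take_size_cat ?size_map // drop_size_cat ?size_map //.
by rewrite -catA -map_comp.
Qed.

Lemma sum_wd (F : word -> nat) : \sum_(S : {set V G}) F (wd S) = FS (map size P) F.
Proof.
rewrite FS_ins.
have -> : sumn (map size P) = size (flatten P) by rewrite size_flatten.
rewrite -sum_sets; last by case: PD.
apply: eq_big => S.
  case: PD => _ a _ _; apply/esym/subsetP => x _; by rewrite inE a.
by move=> _; rewrite wd_ins.
Qed.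

Lemma cp_Lay x y : ((Some x, Some y) \in cp Lay) = has (fun p => (x, y) \in cp p) P.
Proof.
rewrite /Lay; elim: P => [|p P' IH] //=.
by rewrite cat_rcons cp_cat IH.
Qed.

Lemma cp_pos x y : ((Some x, Some y) \in cp Lay) = (pos y == (pos x).+1).
Proof.
apply/(mem_cp _ None)/eqP.
  case=> i [h1 h2 h3].
  by rewrite (pos_of h2) (pos_of h3).
move=> e; exists (pos x); split.
- by rewrite -e pos_lt.
- exact: nth_pos.
- by rewrite -e nth_pos.
Qed.


Lemma adj_pos x y : adj G x y = nadj (pos x) (pos y).
Proof.
case: PD => _ _ _ ->.
rewrite /nadj -!cp_pos !cp_Lay /consec.
by elim: P => //= p P' ->; rewrite /cp; case: ((x, y) \in zip p (behead p)); case: ((y, x) \in zip p (behead p)); case: has; case: has.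
Qed.

Lemma pos_ltw S x : pos x < size (wd S).
Proof. by rewrite size_wd pos_lt. Qed.

Definition posO S x : 'I_(size (wd S)) := Ordinal (pos_ltw S x).

Lemma iso_wd (H : graph) (S : {set V G}) x0 : x0 \in S -> induced_iso G S H = embH H (wd S).
Proof.
move=> hx0; apply/idP/idP.
  case/existsP => f /and3P [inj /eqP img adjf].
  have fS : forall h, f h \in S by move=> h; rewrite -img imset_f.
  apply/existsP; exists [ffun h => posO S (f h)]; apply/and3P; split.
  - apply/injectiveP => h1 h2; rewrite !ffunE => e.
    have : pos (f h1) = pos (f h2) by have := congr1 val e.
    by move/pos_inj; apply: (injectiveP _ inj).
  - apply/eqP/setP => i; rewrite inE; apply/imsetP/idP.
      by case=> h _ ->; rewrite ffunE /= nth_wd_pos fS.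
    move=> /nth_wd_true [x hx hp].
    have : x \in f @: setT by rewrite img.
    case/imsetP => h _ ex; exists h => //; apply: val_inj.
    by rewrite ffunE /= -ex hp.
  - apply/forallP => a; apply/forallP => b; rewrite !ffunE /=.
    by rewrite -adj_pos; move/forallP: adjf => /(_ a) /forallP /(_ b).
case/existsP => f /and3P [inj /eqP img adjf].
pose vert i := if nth None Lay i is Some x then x else x0.
have hv : forall i, nth false (wd S) i -> vert i \in S /\ pos (vert i) = i.
  move=> i /nth_wd_true [x hx hp]; rewrite /vert -hp nth_pos; split => //.
have fT : forall h, nth false (wd S) (f h).
  move=> h; have : f h \in Tw (wd S) by rewrite -img imset_f.
  by rewrite inE.
apply/existsP; exists [ffun h => vert (f h)]; apply/and3P; split.
- apply/injectiveP => h1 h2; rewrite !ffunE => e.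
  apply: (injectiveP _ inj); apply: val_inj.
  have e1 := (hv _ (fT h1)).2; have e2 := (hv _ (fT h2)).2.
  apply: (etrans (esym e1)); by rewrite e e2.
- apply/eqP/setP => x; apply/imsetP/idP.
    by case=> h _ ->; rewrite ffunE; case: (hv _ (fT h)).
  move=> hx.
  have : posO S x \in Tw (wd S) by rewrite inE /= nth_wd_pos.
  rewrite -img => /imsetP [h _ e]; exists h => //.
  by rewrite ffunE -e /= /vert nth_pos.
- apply/forallP => a; apply/forallP => b; rewrite !ffunE /=.
  rewrite adj_pos (hv _ (fT a)).2 (hv _ (fT b)).2.
  by move/forallP: adjf => /(_ a) /forallP /(_ b).
Qed.


Lemma nth_lt (w : word) i : nth false w i -> i < size w.
Proof. by case: ltnP => // h; rewrite nth_default. Qed.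

Lemma emb_map (H : graph) w1 w2 (g h : nat -> nat) :
  (forall i, nth false w1 i -> nth false w2 (g i) /\ h (g i) = i) ->
  (forall j, nth false w2 j -> nth false w1 (h j) /\ g (h j) = j) ->
  (forall i j, nth false w1 i -> nth false w1 j -> nadj (g i) (g j) = nadj i j) ->
  embH H w1 -> embH H w2.
Proof.
move=> c1 c2 c3 /existsP [f /and3P [inj /eqP img adjf]].
have fT : forall x, nth false w1 (f x).
  move=> x; have : f x \in Tw w1 by rewrite -img imset_f.
  by rewrite inE.
have lt : forall x, g (f x) < size w2 by move=> x; apply: nth_lt; case: (c1 _ (fT x)).
apply/existsP; exists [ffun x => (Ordinal (lt x) : 'I_(size w2))]; apply/and3P; split.
- apply/injectiveP => x1 x2; rewrite !ffunE => e.
  have e' : g (f x1) = g (f x2) by have := congr1 val e.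
  apply: (injectiveP _ inj); apply: val_inj.
  apply: (etrans (esym (c1 _ (fT x1)).2)); by rewrite e' (c1 _ (fT x2)).2.
- apply/eqP/setP => j; rewrite inE; apply/imsetP/idP.
    by case=> x _ ->; rewrite ffunE /=; case: (c1 _ (fT x)).
  move=> hj; case: (c2 _ hj) => h1 h2.
  have := nth_lt h1 => hl.
  have : (Ordinal hl : 'I_(size w1)) \in Tw w1 by rewrite inE.
  rewrite -img => /imsetP [x _ e]; exists x => //; apply: val_inj.
  by rewrite ffunE /= -e /= h2.
- apply/forallP => a; apply/forallP => b; rewrite !ffunE /=.
  rewrite c3 ?fT //.
  by move/forallP: adjf => /(_ a) /forallP /(_ b).
Qed.

Lemma emb_eq (H : graph) w1 w2 (g h : nat -> nat) :
  (forall i, nth false w1 i -> nth false w2 (g i) /\ h (g i) = i) ->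
  (forall j, nth false w2 j -> nth false w1 (h j) /\ g (h j) = j) ->
  (forall i j, nth false w1 i -> nth false w1 j -> nadj (g i) (g j) = nadj i j) ->
  embH H w1 = embH H w2.
Proof.
move=> c1 c2 c3; apply/idP/idP; first exact: emb_map c1 c2 c3.
have d1 : forall i, nth false w2 i -> nth false w1 (h i) /\ g (h i) = i by move=> i hi; case: (c2 _ hi).
have d2 : forall i, nth false w1 i -> nth false w2 (g i) /\ h (g i) = i by move=> i hi; case: (c1 _ hi).
have d3 : forall i j, nth false w2 i -> nth false w2 j -> nadj (h i) (h j) = nadj i j.
  move=> i j hi hj; case: (c2 _ hi) => hi1 hi2; case: (c2 _ hj) => hj1 hj2.
  by rewrite -(c3 _ _ hi1 hj1) hi2 hj2.
exact: (emb_map d1 d2 d3).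
Qed.

Lemma nth_sep (a b : word) i : nth false (a ++ false :: b) i =
  if i < size a then nth false a i else if i == size a then false else nth false b (i - (size a).+1).
Proof.
rewrite nth_cat; case: ltnP => // h1; case: eqP => [->|h2]; first by rewrite subnn.
have -> : i - size a = (i - (size a).+1).+1 by lia.
by [].
Qed.

Lemma true_sep (a b : word) i : nth false (a ++ false :: b) i ->
  (i < size a /\ nth false a i) \/ (size a < i /\ nth false b (i - (size a).+1)).
Proof.
rewrite nth_sep; case: ltnP => h1; first by left.
case: eqP => // h2 hb; right; split => //; lia.
Qed.

Lemma nadj_far i j : i.+1 < j -> nadj i j = false /\ nadj j i = false.
Proof. by move=> h; rewrite /nadj; split; apply/negbTE; rewrite negb_or; apply/andP; split; apply/eqP; lia. Qed.

Lemma nadj_shift i j d : nadj (i + d) (j + d) = nadj i j.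
Proof. by rewrite /nadj -!addSn !eqn_add2r. Qed.

Lemma nadj_shiftB i j d : d <= i -> d <= j -> nadj (i - d) (j - d) = nadj i j.
Proof.
move=> h1 h2; rewrite -(nadj_shift (i - d) (j - d) d).
by rewrite !subnK.
Qed.

Lemma nth_catF (a : word) i : nth false (a ++ [:: false]) i = nth false a i.
Proof.
rewrite nth_cat; case: ltnP => // h; rewrite (nth_default false h).
by rewrite -[[:: false]]/(nseq 1 false) nth_nseq if_same.
Qed.

Lemma emb_R4 H a : embH H (a ++ [:: false]) = embH H a.
Proof.
apply: (@emb_eq H _ _ id id).
- by move=> i; rewrite nth_catF.
- by move=> i; rewrite nth_catF.
- by [].
Qed.

Lemma emb_R3 H a : embH H (false :: a) = embH H a.
Proof.
apply: (@emb_eq H _ _ predn succn).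
- by case.
- by [].
- move=> [|i] [|j] /= hi hj //.
Qed.

Lemma emb_R2 H a b : embH H (a ++ false :: false :: b) = embH H (a ++ false :: b).
Proof.
set A := size a.
pose g i := if i <= A then i else i.-1.
pose h j := if j <= A then j else j.+1.
have reg : forall i, nth false (a ++ false :: false :: b) i ->
    (i < A /\ nth false a i /\ g i = i) \/ (A.+1 < i /\ nth false b (i - A.+2) /\ g i = i.-1).
  move=> i /true_sep [[h1 h2]|[h1]]; first by left; rewrite /g; case: ifP => hh; [|lia].
  case e: (i - A.+1) => [|k] //= hk; right.
  have e2 : i - A.+2 = k by lia.
  rewrite e2; split; [lia|split => //]; rewrite /g; case: ifP => hh; lia.
apply: (@emb_eq H _ _ g h).
- move=> i /reg [[h1 [h2 h3]]|[h1 [h2 h3]]]; rewrite h3 nth_sep.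
    by rewrite h1; split => //; rewrite /h; case: ifP => //; lia.
  case: ltnP => c1; first lia.
  case: eqP => c2; first lia.
  have -> : i.-1 - A.+1 = i - A.+2 by lia.
  by split => //; rewrite /h; case: ifP => hh; lia.
- move=> j /true_sep [[h1 h2]|[h1 h2]].
    have e : h j = j by rewrite /h; case: ifP => //; lia.
    rewrite e nth_sep h1; split => //; rewrite /g; case: ifP => //; lia.
  have e : h j = j.+1 by rewrite /h; case: ifP => //; lia.
  rewrite e nth_sep; case: ltnP => c1; first lia.
  case: eqP => c2; first lia.
  have -> : j.+1 - A.+1 = (j - A.+1).+1 by lia.
  by split => //; rewrite /g; case: ifP => hh; lia.
- move=> i j /reg [[i1 [_ i3]]|[i1 [_ i3]]] /reg [[j1 [_ j3]]|[j1 [_ j3]]]; rewrite i3 j3 //.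
  + by rewrite (nadj_far (i := i) (j := j.-1) _).1 ?(nadj_far (i := i) (j := j) _).1 //; lia.
  + by rewrite (nadj_far (i := j) (j := i.-1) _).2 ?(nadj_far (i := j) (j := i) _).2 //; lia.
  + by rewrite -!subn1 nadj_shiftB //; lia.
Qed.

Lemma nadj_far2 i j : i.+1 < j \/ j.+1 < i -> nadj i j = false.
Proof. by move=> h; rewrite /nadj; apply/negbTE; rewrite negb_or; apply/andP; split; apply/eqP; lia. Qed.

Definition sw (A B C i : nat) := if i <= A then i else if i <= A + B then i + C.+1 else i - B.+1.

Lemma sw_a A B C i : i <= A -> sw A B C i = i.
Proof. by rewrite /sw => ->. Qed.
Lemma sw_b A B C i : A < i <= A + B -> sw A B C i = i + C.+1.
Proof. by rewrite /sw => /andP [h1 h2]; case: ifP => h; [lia|rewrite h2]. Qed.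
Lemma sw_c A B C i : A + B < i -> sw A B C i = i - B.+1.
Proof. by rewrite /sw => h; case: ifP => h1; [lia|case: ifP => h2; lia]. Qed.

Lemma reg3 (a b c : word) i : nth false (a ++ false :: b ++ false :: c) i ->
  [\/ i < size a /\ nth false a i,
      [/\ size a < i, i <= size a + size b & nth false b (i - (size a).+1)] |
      [/\ (size a + size b).+1 < i, i - (size a + size b).+2 < size c & nth false c (i - (size a + size b).+2)]].
Proof.
move=> /true_sep [[h1 h2]|[h1 /true_sep [[h2 h3]|[h2 h3]]]]; first by constructor 1.
  by constructor 2; split => //; lia.
have e : i - (size a).+1 - (size b).+1 = i - (size a + size b).+2 by lia.
rewrite e in h3; constructor 3; split => //; first lia.
exact: nth_lt h3.
Qed.

Lemma sw_fwd (a b c : word) i : nth false (a ++ false :: b ++ false :: c) i ->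
  nth false (a ++ false :: c ++ false :: b) (sw (size a) (size b) (size c) i) /\
  sw (size a) (size c) (size b) (sw (size a) (size b) (size c) i) = i.
Proof.
move=> /reg3 [[h1 h2]|[h1 h2 h3]|[h1 h2 h3]].
- rewrite !sw_a; try lia; split => //.
  by rewrite nth_sep h1.
- rewrite sw_b; last by lia.
  rewrite sw_c; last by lia.
  split; last by lia.
  rewrite nth_sep; case: ltnP => c1; first lia.
  case: eqP => c2; first lia.
  rewrite nth_sep; case: ltnP => c3; first lia.
  case: eqP => c4; first lia.
  by have -> : i + (size c).+1 - (size a).+1 - (size c).+1 = i - (size a).+1 by lia.
- rewrite sw_c; last by lia.
  rewrite sw_b; last by lia.
  split; last by lia.
  rewrite nth_sep; case: ltnP => c1; first lia.
  case: eqP => c2; first lia.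
  rewrite nth_sep; case: ltnP => c3; last lia.
  by have -> : i - (size b).+1 - (size a).+1 = i - (size a + size b).+2 by lia.
Qed.

Lemma emb_R1 H a b c : embH H (a ++ false :: b ++ false :: c) = embH H (a ++ false :: c ++ false :: b).
Proof.
apply: (@emb_eq H _ _ (sw (size a) (size b) (size c)) (sw (size a) (size c) (size b))).
- exact: sw_fwd.
- exact: sw_fwd.
move=> i j /reg3 [[i1 i2]|[i1 i2 i3]|[i1 i2 i3]] /reg3 [[j1 j2]|[j1 j2 j3]|[j1 j2 j3]].
- by rewrite !sw_a //; lia.
- rewrite sw_a ?sw_b; try lia; rewrite !nadj_far2 //; lia.
- rewrite sw_a ?sw_c; try lia; rewrite !nadj_far2 //; lia.
- rewrite sw_b ?sw_a; try lia; rewrite !nadj_far2 //; lia.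
- by rewrite !sw_b ?nadj_shift //; lia.
- rewrite sw_b ?sw_c; try lia; rewrite !nadj_far2 //; lia.
- rewrite sw_c ?sw_a; try lia; rewrite !nadj_far2 //; lia.
- rewrite sw_c ?sw_b; try lia; rewrite !nadj_far2 //; lia.
- by rewrite !sw_c ?nadj_shiftB //; lia.
Qed.

Definition FH (H : graph) k (w : word) : nat := (count id w == k) && embH H w.

Lemma good_FH H k : good (FH H k).
Proof.
split.
- move=> a b c; rewrite /FH emb_R1; congr (nat_of_bool (_ && _)).
  by rewrite !count_cat /= !count_cat /=; congr (_ == _); lia.
- move=> a b; rewrite /FH emb_R2; congr (nat_of_bool (_ && _)).
  by rewrite !count_cat.
- by move=> a; rewrite /FH emb_R3.
- move=> a; rewrite /FH emb_R4; congr (nat_of_bool (_ && _)).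
  by rewrite !count_cat /= !addn0.
Qed.

Lemma lvl_FH H k : lvl k (FH H k).
Proof. move=> w hw; rewrite /FH; have -> : (count id w == k) = false by apply/eqP; lia. by []. Qed.

Fixpoint adj2 (w : word) : bool :=
  match w with
  | a :: ((b :: _) as w') => (a && b) || adj2 w'
  | _ => false
  end.

Lemma adj2P (w : word) : reflect (exists i, nth false w i && nth false w i.+1) (adj2 w).
Proof.
elim: w => [|a w IH]; first by apply: ReflectF => -[i]; rewrite !nth_nil.
case: w IH => [|b w] IH /=.
  by apply: ReflectF => -[[|i]] /=; rewrite ?nth_nil ?andbF.
apply: (iffP orP).
  case=> [h|/IH [i hi]]; first by exists 0.
  by exists i.+1.
case=> [[|i] hi]; first by left.
by right; apply/IH; exists i.
Qed.

Lemma adj2_cat u w : adj2 (u ++ false :: w) = adj2 u || adj2 w.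
Proof.
elim: u => [|a u IH] /=; first by case: w.
case: u IH => [|b u] IH; first by clear IH; case: w => [|c w] /=; rewrite ?andbF.
change (a && b || adj2 ((b :: u) ++ false :: w) = (a && b || adj2 (b :: u)) || adj2 w).
by rewrite IH orbA.
Qed.

Lemma adj2_cnt w : adj2 w -> 1 < count id w.
Proof.
elim: w => [|a w IH] //=; case: w IH => [|b w] IH //= /orP [/andP [-> ->]|/IH] /=; lia.
Qed.

Definition F2 (w : word) : nat := (count id w == 2) && adj2 w.
Definition Z0 (w : word) : nat := count id w == 0.

Lemma SW_scal m c Gf : SW m (fun w => c * Gf w) = c * SW m Gf.
Proof. by elim: m Gf => [|m IH] Gf //=; rewrite !IH mulnDr. Qed.

Lemma FS_scal ms c Gf : FS ms (fun w => c * Gf w) = c * FS ms Gf.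
Proof.
elim: ms Gf => [|m ms IH] Gf //=.
by rewrite -SW_scal; apply: SW_ext => u _; rewrite -IH.
Qed.

Lemma FS_add ms G1 G2 : FS ms (fun w => G1 w + G2 w) = FS ms G1 + FS ms G2.
Proof.
elim: ms G1 G2 => [|m ms IH] G1 G2 //=.
by rewrite -SW_add; apply: SW_ext => u _; rewrite IH.
Qed.

Lemma SW_Z0 m : SW m Z0 = 1.
Proof. by rewrite SW_lvl0 /Z0 ?cnt_nseq // => w hw; rewrite /Z0; case: eqP => //; lia. Qed.

Lemma FS_Z0 ms : FS ms Z0 = 1.
Proof.
elim: ms => [|m ms IH] //=.
rewrite -(SW_Z0 m); apply: SW_ext => u _.
rewrite (@FS_ext _ _ (fun w => Z0 u * Z0 w)) ?FS_scal ?IH ?muln1 //.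
by move=> w; rewrite /Z0 cnt_cat /=; case: (count id u); case: (count id w).
Qed.

Lemma F2_cat u w : F2 (u ++ false :: w) = Z0 u * F2 w + F2 u * Z0 w.
Proof.
rewrite /F2 /Z0 cnt_cat /= adj2_cat.
have hu := @adj2_cnt u; have hw := @adj2_cnt w.
move: hu hw; case: (adj2 u); case: (adj2 w) => /= hu hw.
- have := hu isT; have := hw isT => h1 h2.
  by do ! case: eqP => /= ?; try lia.
- have := hu isT => h2.
  by do ! case: eqP => /= ?; try lia.
- have := hw isT => h2.
  by do ! case: eqP => /= ?; try lia.
- by rewrite !andbF !muln0.
Qed.

Lemma SW_F2 m : SW m F2 = m.-1.
Proof.
elim: m => [|m IH] //=.
rewrite (@SW_ext _ (fun w => F2 (false :: w)) F2); last by move=> w _; rewrite /F2 /=; case: w.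
rewrite IH (@SW_ext _ _ (fun w => (count id w == 1) && nth false w 0)); last first.
  move=> w _; rewrite /F2.
  have -> : adj2 (true :: w) = nth false w 0 || adj2 w by case: w.
  have -> : count id (true :: w) = (count id w).+1 by [].
  have := @adj2_cnt w; case: (adj2 w) => h.
    rewrite orbT andbT; have -> : ((count id w).+1 == 2) = false by apply/eqP; have := h isT; lia.
    by have -> : (count id w == 1) = false by apply/eqP; have := h isT; lia.
  by rewrite orbF.
case: m {IH} => [|m] //=.
rewrite (@SW_zero _ (fun w => (count id w == 1) && false)); last by move=> w; rewrite andbF.
rewrite addn0 (@SW_ext _ _ Z0) ?SW_Z0 //.
by move=> w _; rewrite /Z0 andbT.
Qed.

Lemma FS_F2 ms : all (fun m => 0 < m) ms -> FS ms F2 + size ms = sumn ms.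
Proof.
elim: ms => [|m ms IH] //= /andP [hm /IH h].
rewrite (@SW_ext _ _ (fun u => Z0 u * FS ms F2 + F2 u * FS ms Z0)); last first.
  move=> u _; rewrite -!FS_scal -FS_add; apply: FS_ext => w; by rewrite F2_cat.
rewrite SW_add FS_Z0 (@SW_ext _ (fun u => F2 u * 1) F2); last by move=> u _; rewrite muln1.
rewrite SW_F2 (@SW_ext _ _ (fun u => FS ms F2 * Z0 u)); last by move=> u _; rewrite mulnC.
rewrite SW_scal SW_Z0; lia.
Qed.

Lemma card_sum (T : finType) (p : pred T) : #|[set x | p x]| = \sum_(x : T) (p x : nat).
Proof.
rewrite cardsE -sum1_card big_mkcond /=; apply: eq_bigr => x _.
by rewrite unfold_in; case: (p x).
Qed.

Lemma nverts_P : nverts G = sumn (map size P).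
Proof.
by rewrite /nverts cardT -(perm_size perm_flat) size_flatten.
Qed.

Lemma edge_F2 (E : {set V G}) :
  [exists x, exists y, (E == [set x; y]) && adj G x y] = (count id (wd E) == 2) && adj2 (wd E).
Proof.
rewrite count_wd; apply/idP/idP.
  case/existsP => x /existsP [y /andP [/eqP -> hxy]].
  have nxy : x != y by apply/eqP => e; rewrite e (adj_irrefl G y) in hxy.
  rewrite cards2 nxy /=; apply/adj2P.
  move: hxy; rewrite adj_pos /nadj => /orP [/eqP e|/eqP e].
    by exists (pos x); rewrite -e !nth_wd_pos !inE !eqxx ?orbT.
  by exists (pos y); rewrite -e !nth_wd_pos !inE !eqxx ?orbT.
case/andP => /eqP h2 /adj2P [i /andP [hi hi1]].
case: (nth_wd_true hi) => x hx ex; case: (nth_wd_true hi1) => y hy ey.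
have nxy : x != y by apply/eqP => e; move: ey; rewrite -e ex; lia.
apply/existsP; exists x; apply/existsP; exists y; apply/andP; split.
  rewrite eq_sym eqEcard; apply/andP; split.
    by apply/subsetP => z; rewrite !inE => /orP [/eqP ->|/eqP ->].
  by rewrite h2 cards2 nxy.
by rewrite adj_pos /nadj ex ey eqxx.
Qed.

Lemma nedges_P : nedges G + size P = nverts G.
Proof.
rewrite nverts_P /nedges card_sum.
rewrite (eq_bigr (fun E => F2 (wd E))); last by move=> E _; rewrite edge_F2.
rewrite sum_wd -(size_map size P) FS_F2 //.
apply/allP => m /mapP [p hp ->]; case: PD => _ _ ne _.
by rewrite lt0n size_eq0 ne.
Qed.

Lemma deck_FS H k : 0 < k -> deck_count k G H = FS (map size P) (FH H k).
Proof.
move=> k0; rewrite /deck_count card_sum -sum_wd; apply: eq_bigr => S _.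
rewrite /FH count_wd.
case e: (#|S| == k) => //=.
have : 0 < #|S| by move/eqP: e => ->.
by case/card_gt0P => x0 hx0; rewrite (iso_wd H hx0).
Qed.

End GraphLay.

Unset Implicit Arguments.

Theorem corollary2p5 (k : nat) (G G' : graph) :
  0 < k ->
  linear_forest_minc G k.-1 ->
  linear_forest_minc G' k.-1 ->
  nverts G = nverts G' ->
  nedges G = nedges G' ->
  same_deck k G G'.
Proof.
move=> k0 [P [PD hP]] [P' [PD' hP']] hn he H.
rewrite (deck_FS PD H k0) (deck_FS PD' H k0).
apply: Req_all.
- by apply/allP => m /mapP [p hp ->]; apply: hP.
- by apply/allP => m /mapP [p hp ->]; apply: hP'.
- have := nedges_P PD; have := nedges_P PD'; rewrite !size_map; lia.
- by rewrite -(nverts_P PD) -(nverts_P PD').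
- exact: good_FH.
- exact: lvl_FH.
Qed.
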